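(* If $|D|\ge 2n^2$, then at least a fraction $1/e$ of all inputs in $(D\times D)^n$ belong to $EB^{-1}(1)$.
   Context: $D$ is a finite domain. Two elements $x=(x_1,x_2)$ and $y=(y_1,y_2)$ of $D\times D$ are bidistinct if $x_1\ne y_2$ and $x_2\ne y_1$. The element bidistinctness function $EB:(D\times D)^n\to\{0,1\}$ equals $1$ iff for every pair of indices $1\le i,j\le n$ the $i$-th and $j$-th pairs of the input are bidistinct. *)

(* Defs.v *)
From mathcomp Require Import all_boot all_order all_algebra.
From mathcomp Require Import all_classical all_reals all_analysis.
Set Implicit Arguments. Unset Strict Implicit. Unset Printing Implicit Defensive.

Definition bidistinct (D : finType) (x y : D * D) : bool :=
  (x.1 != y.2) && (x.2 != y.1).

Definition EB (D : finType) (n : nat) (z : {ffun 'I_n -> D * D}) : bool :=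
  [forall i : 'I_n, forall j : 'I_n, bidistinct (z i) (z j)].

(* Main.v *)
Require Import Defs.
From mathcomp Require Import all_boot all_order all_algebra.
From mathcomp Require Import all_classical all_reals all_analysis.
From mathcomp Require Import zify ring lra.
Import Order.TTheory GRing.Theory Num.Theory.
Local Open Scope ring_scope.

Section Count.
Variables (D : finType) (n : nat).
Local Notation T := {ffun 'I_n -> D * D}.

Definition Pset (i j : 'I_n) : {set T} := [set z : T | (z i).1 == (z j).2].

Definition upd (j : 'I_n) (zc : T * D) : T :=
  [ffun k => if k == j then (((zc.1) k).1, zc.2) else zc.1 k].

Lemma Pset_card i j : (#|Pset i j| * #|D| <= #|T|)%N.
Proof.
rewrite -[#|D|]cardsT -cardsX.
rewrite -(@card_in_imset _ _ (upd j)); first exact: max_card.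
move=> [z c] [z' c'] /setXP [] /=; rewrite inE => /eqP Hz _.
move=> /setXP [] /=; rewrite inE => /eqP Hz' _ E.
have Ej := congr1 (fun f : T => f j) E; rewrite /= !ffunE eqxx in Ej.
case: Ej => E1 Ec.
have Ei := congr1 (fun f : T => (f i).1) E; rewrite /= !ffunE in Ei.
have Ei1 : (z i).1 = (z' i).1 by move: Ei; case: (i == j).
congr pair; last by [].
apply/ffunP => k.
have Ek := congr1 (fun f : T => f k) E; rewrite /= !ffunE in Ek.
case: eqP Ek => [-> _|_ //].
by rewrite [z j]surjective_pairing [z' j]surjective_pairing E1 -Hz -Hz' Ei1.
Qed.

Lemma bad_sub : (~: [set z : T | EB z]) \subset
   \bigcup_(p : ('I_n * 'I_n)%type) Pset p.1 p.2.
Proof.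
apply/fintype.subsetP => z; rewrite !inE => /forallPn [i] /forallPn [j].
rewrite /bidistinct negb_and !negbK => /orP [] /eqP H.
  by apply/finset.bigcupP; exists (i, j) => //; rewrite inE H.
by apply/finset.bigcupP; exists (j, i) => //; rewrite inE H.
Qed.

Lemma union_bound (I : finType) (F : I -> {set T}) :
  (#|\bigcup_(p : I) F p| <= \sum_(p : I) #|F p|)%N.
Proof.
elim/big_rec2: _ => [|p s U _ H]; first by rewrite cards0.
by rewrite (leq_trans (leq_card_setU _ _)) // leq_add2l.
Qed.

Lemma good_card : (2 * n ^ 2 <= #|D|)%N ->
  (#|T| <= 2 * #|[set z : T | EB z]|)%N.
Proof.
move=> Hd.
have H1 : (#|~: [set z : T | EB z]| <= \sum_(p : ('I_n * 'I_n)%type) #|Pset p.1 p.2|)%N.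
exact: (leq_trans (subset_leq_card bad_sub) (@union_bound _ (fun p : ('I_n * 'I_n)%type => Pset p.1 p.2))).
have H2 : ((\sum_(p : ('I_n * 'I_n)%type) #|Pset p.1 p.2|) * #|D| <= n ^ 2 * #|T|)%N.
  rewrite big_distrl /=.
  apply: leq_trans; first by apply: leq_sum => p _; exact: Pset_card.
  by rewrite sum_nat_const card_prod card_ord.
have Hc := cardsC [set z : T | EB z].
have H3 := leq_trans (leq_mul H1 (leqnn #|D|)) H2.
move: H1 H2 H3 Hc.
set b := #|~: _|; set g := #|[set z : T | EB z]|; set S := \sum_(p : ('I_n * 'I_n)%type) _.
move=> H1 H2 H3 Hc.
case: (posnP n) => [n0 | npos].
  have : b = 0%N.
    apply/eqP; rewrite -leqn0; apply: leq_trans H1 _.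
    rewrite /S big1 // => -[i j] _.
    by have := ltn_ord i; rewrite {2}n0.
  move=> b0; rewrite -[#|{ffun 'I_n -> D * D}|]Hc b0 addn0; lia.
have H4 : (n ^ 2 * (2 * b) <= n ^ 2 * #|T|)%N.
  apply: leq_trans H3.
  have := leq_mul (leqnn b) Hd; nia.
rewrite leq_pmul2l ?expn_gt0 ?npos // in H4.
move: H4; rewrite -[#|{ffun 'I_n -> D * D}|]Hc; lia.
Qed.
End Count.

Theorem lemma9 (R : realType) (D : finType) (n : nat) :
  (2 * n ^ 2 <= #|D|)%N ->
  (#|[set z : {ffun 'I_n -> D * D} | EB z]|%:R
     / #|{ffun 'I_n -> D * D}|%:R : R) >= (expR (1 : R))^-1.
Proof.
move=> Hd.
have Hg := @good_card D n Hd.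
move: Hg; set g := #|[set z | EB z]|; set t := #|{ffun 'I_n -> D * D}| => Hg.
have tpos : (0 < t)%N.
  rewrite /t card_ffun card_ord card_prod expn_gt0.
  rewrite orbC; case: eqP => //= /eqP; rewrite -lt0n => np.
  rewrite muln_gt0 andbb; apply: leq_trans Hd; by rewrite muln_gt0 expn_gt0 np.
have Hg' : (t%:R <= 2 * g%:R :> R).
  by rewrite -natrM ler_nat.
have tR : (0 < t%:R :> R) by rewrite ltr0n.
have e2 : (2 <= expR (1 : R)).
  by have := expR_ge1Dx (1 : R); rewrite (_ : 1 + 1 = 2 :> R) //.
have einv : (expR (1 : R))^-1 <= 2^-1.
  by rewrite lef_pV2 ?posrE ?expR_gt0 //.
rewrite ler_pdivlMr //.
have e0 : 0 <= (expR (1 : R))^-1 by rewrite invr_ge0 expR_ge0.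
nra.
Qed.
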